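(* Let $n\ge 1$ and let $\|\cdot\|_L$ be one of the vectorized norms $L_1,L_2,L_\infty$ on $\mathbb{R}^{n\times n}$. Let $M\subset\mathbb{R}^{n\times n}$ be a set containing an open ball $B(a,c)=\{x:\|x-a\|_L<c\}$ whose radius $c$ is large enough that $B(a,c)$ contains a singular matrix of rank $n-1$. Let $F:\mathbb{R}^{n\times n}\to\mathbb{R}^{n\times n}$ be any polynomial Lipschitz continuous function. Then for every $E>0$ there exists an invertible matrix $x\in M$ such that $$\|\mathrm{Inv}(x)-F(x)\|_L>E.$$
   Context: $\mathrm{Inv}(x)=x^{-1}$ denotes matrix inversion, defined on invertible matrices. For $A=(a_{ij})\in\mathbb{R}^{n\times n}$ the norms are vectorized: $\|A\|_{L_1}=\sum_{i,j}|a_{ij}|$, $\|A\|_{L_2}=(\sum_{i,j}|a_{ij}|^2)^{1/2}$, $\|A\|_{L_\infty}=\max_{i,j}|a_{ij}|$; $\mathbb{R}^{n\times n}$ is identified with $\mathbb{R}^{n^2}$. A function $f:\mathbb{R}^{n_1}\to\mathbb{R}^{n_2}$ is called polynomial Lipschitz continuous with respect to norms $\|\cdot\|_{L^+}$, $\|\cdot\|_{L^*}$ (chosen among $L_1,L_2,L_\infty$) if there exist a nonnegative integer $N$ and real polynomials $f_0,\dots,f_N$ in two variables such that for all $x,y$, $\|f(x)-f(y)\|_{L^*}\le \sum_{i=0}^{N} f_i(\|x\|_{L^+},\|y\|_{L^+})\|x-y\|_{L^+}^{i}$. *)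

(* Defs.v *)
From HB Require Import structures.
From mathcomp Require Import all_boot all_order all_algebra.
From mathcomp Require Import reals.
Set Implicit Arguments. Unset Strict Implicit. Unset Printing Implicit Defensive.
Import Order.TTheory GRing.Theory Num.Theory.
Local Open Scope ring_scope.

Inductive Lnorm_kind := L1 | L2 | Linf.

Definition mnorm {R : realType} {n : nat} (L : Lnorm_kind) (A : 'M[R]_n) : R :=
  match L with
  | L1 => \sum_(i < n) \sum_(j < n) `|A i j|
  | L2 => Num.sqrt (\sum_(i < n) \sum_(j < n) `|A i j| ^+ 2)
  | Linf => \big[Num.max/0]_(i < n) \big[Num.max/0]_(j < n) `|A i j|
  end.

(* Real polynomial in two variables (s, t), represented in {poly {poly R}}:
   inner variable s, outer variable t. *)
Definition eval2 {R : realType} (p : {poly {poly R}}) (s t : R) : R :=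
  (p.[t%:P]).[s].

Definition poly_lipschitz {R : realType} {n : nat} (Lp Ls : Lnorm_kind)
  (f : 'M[R]_n -> 'M[R]_n) : Prop :=
  exists (N : nat) (fs : nat -> {poly {poly R}}),
    forall x y : 'M[R]_n,
      mnorm Ls (f x - f y) <=
      \sum_(i < N.+1) eval2 (fs i) (mnorm Lp x) (mnorm Lp y) * mnorm Lp (x - y) ^+ i.

(* Main.v *)
Require Import Defs.
From HB Require Import structures.
From mathcomp Require Import all_boot all_order all_algebra.
From mathcomp Require Import reals.
From mathcomp Require Import ring lra.
Import Order.TTheory GRing.Theory Num.Theory.

Local Open Scope ring_scope.

Section Aux.
Context {R : realType}.
Context {n : nat}.

Definition Ssum (A : 'M[R]_n) : R := \sum_(i < n) \sum_(j < n) `|A i j|.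

Lemma le_sum_term {I : finType} (G : I -> R) i :
  (forall j, 0 <= G j) -> G i <= \sum_j G j.
Proof. by move=> H; rewrite (bigD1 i) //= lerDl sumr_ge0. Qed.

Lemma Ssum_ge0 A : 0 <= Ssum A.
Proof. by apply: sumr_ge0 => i _; apply: sumr_ge0. Qed.

Lemma entry_le_Ssum (A : 'M[R]_n) i j : `|A i j| <= Ssum A.
Proof.
have h1 : `|A i j| <= \sum_(j < n) `|A i j|.
  by apply: (le_sum_term (fun j => `|A i j|)).
apply: (le_trans h1); rewrite /Ssum.
apply: (le_sum_term (fun i => \sum_(j < n) `|A i j|)) => k.
exact: sumr_ge0.
Qed.

Lemma bigmax_le {I : finType} (G : I -> R) c :
  0 <= c -> (forall j, G j <= c) -> \big[Num.max/0]_(j : I) G j <= c.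
Proof.
move=> c0 H; elim/big_ind: _ => //.
  by move=> x y hx hy; rewrite ge_max hx hy.
Qed.

Lemma le_bigmax_term {I : finType} (G : I -> R) i :
  G i <= \big[Num.max/0]_(j : I) G j.
Proof. by rewrite (bigD1 i) //= le_max lexx. Qed.

Lemma bigmax_ge0 {I : finType} (G : I -> R) : 0 <= \big[Num.max/0]_(j : I) G j.
Proof.
elim/big_rec: _ => // i x _ hx; by rewrite le_max hx orbT.
Qed.

Definition Q2 (A : 'M[R]_n) := \sum_(i < n) \sum_(j < n) `|A i j| ^+ 2.

Lemma Q2_ge0 A : 0 <= Q2 A.
Proof. by apply: sumr_ge0 => i _; apply: sumr_ge0 => j _; apply: sqr_ge0. Qed.

Lemma entry_le_L2 (A : 'M[R]_n) i j : `|A i j| <= Num.sqrt (Q2 A).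
Proof.
rewrite -{1}(normr_id (A i j)) -sqrtr_sqr ler_sqrt; last exact: Q2_ge0.
have h1 : `|A i j| ^+ 2 <= \sum_(j < n) `|A i j| ^+ 2.
  by apply: (le_sum_term (fun j => `|A i j| ^+ 2)) => k; apply: sqr_ge0.
apply: (le_trans h1); rewrite /Q2.
apply: (le_sum_term (fun i => \sum_(j < n) `|A i j| ^+ 2)) => k.
by apply: sumr_ge0 => l _; apply: sqr_ge0.
Qed.

Lemma mnorm_ge0 L (A : 'M[R]_n) : 0 <= mnorm L A.
Proof.
case: L => /=; first exact: Ssum_ge0.
  exact: sqrtr_ge0.
exact: bigmax_ge0.
Qed.

Lemma entry_le_mnorm L (A : 'M[R]_n) i j : `|A i j| <= mnorm L A.
Proof.
case: L => /=; first exact: entry_le_Ssum.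
  exact: entry_le_L2.
apply: (le_trans _ (le_bigmax_term (fun i => \big[Num.max/0]_(j < n) `|A i j|) i)).
exact: (le_bigmax_term (fun j => `|A i j|)).
Qed.

Lemma mnorm_addS L (A B : 'M[R]_n) : mnorm L (A + B) <= mnorm L A + Ssum B.
Proof.
case: L => /=.
- rewrite /Ssum -big_split /=; apply: ler_sum => i _.
  rewrite -big_split /=; apply: ler_sum => j _; rewrite mxE; exact: ler_normD.
- rewrite -/(Q2 (A + B)) -/(Q2 A) -/(Ssum B).
  set s := Num.sqrt (Q2 A); set S := Ssum B.
  have s0 : 0 <= s by exact: sqrtr_ge0.
  have S0 : 0 <= S by exact: Ssum_ge0.
  rewrite -(ger0_norm (addr_ge0 s0 S0)) -sqrtr_sqr ler_sqrt; last exact: sqr_ge0.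
  have -> : (s + S) ^+ 2 = Q2 A + (2 * s + S) * S.
    have hs : s ^+ 2 = Q2 A by rewrite /s sqr_sqrtr // Q2_ge0.
    rewrite -hs; ring.
  rewrite /Q2 /S /Ssum mulr_sumr -big_split /=; apply: ler_sum => i _.
  rewrite mulr_sumr -big_split /=; apply: ler_sum => j _; rewrite mxE.
  have ha : `|A i j| <= s := entry_le_L2 A i j.
  have hb : `|B i j| <= S := entry_le_Ssum B i j.
  have hab := ler_normD (A i j) (B i j).
  have h0 : 0 <= `|A i j + B i j| by [].
  have h1 : 0 <= `|A i j| by [].
  have h2 : 0 <= `|B i j| by [].
  move: ha hb hab h0 h1 h2; set x := `|A i j + B i j|; set a := `|A i j|; set b := `|B i j|.
  move=> ha hb hab h0 h1 h2.
  have p1 : 0 <= (a + b - x) * (a + b + x) by apply: mulr_ge0; lra.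
  have p2 : 0 <= (s - a) * b by apply: mulr_ge0; lra.
  have p3 : 0 <= (S - b) * b by apply: mulr_ge0; lra.
  have -> : \sum_(i0 < n) \sum_(j0 < n) `|B i0 j0| = S by [].
  nra.
- apply: bigmax_le => [|i]; first by apply: addr_ge0; [exact: bigmax_ge0|exact: Ssum_ge0].
  apply: bigmax_le => [|j]; first by apply: addr_ge0; [exact: bigmax_ge0|exact: Ssum_ge0].
  rewrite mxE; apply: le_trans (ler_normD _ _) _; apply: lerD.
    apply: (le_trans _ (le_bigmax_term (fun i => \big[Num.max/0]_(j < n) `|A i j|) i)).
    exact: (le_bigmax_term (fun j => `|A i j|)).
  exact: entry_le_Ssum.
Qed.

Lemma mnorm_leS L (B : 'M[R]_n) : mnorm L B <= Ssum B.
Proof.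
have := mnorm_addS L 0 B; rewrite add0r.
have -> : mnorm L (0 : 'M[R]_n) = 0.
  case: L => /=.
  - by rewrite big1 // => i _; rewrite big1 // => j _; rewrite mxE normr0.
  - by rewrite big1 ?sqrtr0 // => i _; rewrite big1 // => j _; rewrite mxE normr0 expr0n.
  - elim/big_rec: _ => // i x _ ->.
    have -> : \big[Num.max/0]_(j < n) `|(0 : 'M[R]_n) i j| = 0.
      by elim/big_rec: _ => // j y _ ->; rewrite mxE normr0 maxxx.
    by rewrite maxxx.
by rewrite add0r.
Qed.

End Aux.
Section Aux2.
Context {R : realType}.

Lemma poly1_bound (q : {poly R}) (K : R) : 0 <= K ->
  exists B, 0 <= B /\ forall s, `|s| <= K -> `|q.[s]| <= B.
Proof.
move=> K0; elim/poly_ind: q => [|p c [B [B0 HB]]].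
  by exists 0; split=> // s _; rewrite horner0 normr0.
exists (B * K + `|c|); split; first by apply: addr_ge0 => //; apply: mulr_ge0.
move=> s hs; rewrite hornerMXaddC; apply: le_trans (ler_normD _ _) _.
rewrite normrM lerD2r; apply: ler_pM => //; exact: HB.
Qed.

Lemma poly2_bound (p : {poly {poly R}}) (K : R) : 0 <= K ->
  exists B, 0 <= B /\ forall s t, `|s| <= K -> `|t| <= K -> `|eval2 p s t| <= B.
Proof.
move=> K0; elim/poly_ind: p => [|p c [B [B0 HB]]].
  by exists 0; split=> // s t _ _; rewrite /eval2 !horner0 normr0.
have [Bc [Bc0 HBc]] := poly1_bound c K K0.
exists (B * K + Bc); split; first by apply: addr_ge0 => //; apply: mulr_ge0.
move=> s t hs ht; rewrite /eval2 hornerMXaddC hornerD hornerM hornerC.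
apply: le_trans (ler_normD _ _) _; apply: lerD; last exact: HBc.
rewrite normrM; apply: ler_pM => //; exact: HB.
Qed.

Lemma sum_poly2_bound m (fs : nat -> {poly {poly R}}) (K : R) : 0 <= K ->
  exists B, forall s t, `|s| <= K -> `|t| <= K ->
    \sum_(i < m) `|eval2 (fs i) s t| <= B.
Proof.
move=> K0; elim: m => [|m [B HB]].
  by exists 0 => s t _ _; rewrite big_ord0.
have [B' [_ HB']] := poly2_bound (fs m) K K0.
exists (B + B') => s t hs ht; rewrite big_ord_recr /=.
by apply: lerD; [exact: HB | exact: HB'].
Qed.

Lemma nonunit_ker n (A : 'M[R]_n) : A \notin unitmx ->
  exists v : 'rV[R]_n, v != 0 /\ v *m A = 0.
Proof.
rewrite -row_free_unit -kermx_eq0 => nz.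
have [i Hi] : exists i, row i (kermx A) != 0.
  apply/existsP; apply: contraR nz => /existsPn H.
  apply/eqP/row_matrixP => i; rewrite row0; exact/eqP/negPn/H.
by exists (row i (kermx A)); split=> //; rewrite -row_mul mulmx_ker row0.
Qed.

Lemma nonroot_in (p : {poly R}) tm : p != 0 -> 0 < tm ->
  exists t, 0 < t /\ t <= tm /\ ~~ root p t.
Proof.
move=> p0 tm0.
pose rs := [seq tm / (j.+1)%:R | j <- iota 0 (size p)].
have Hu : uniq rs.
  rewrite map_inj_uniq ?iota_uniq // => j k.
  move/(congr1 (fun x => x^-1 * tm)); rewrite /= !invf_div !divfK ?gt_eqF //.
  by move/eqP; rewrite eqr_nat eqSS => /eqP.
have : ~~ all (root p) rs.
  apply/negP => Ha; have := max_poly_roots p0 Ha Hu.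
  by rewrite size_map size_iota ltnn.
case/allPn => _ /mapP [j _ ->] hr.
exists (tm / (j.+1)%:R); split; last split => //.
  by apply: divr_gt0 => //; rewrite ltr0n.
rewrite ler_pdivrMr ?ltr0n // ler_peMr ?ler1n //; exact: ltW.
Qed.

End Aux2.
Theorem theorem3p7 (R : realType) (n : nat) (hn : (0 < n)%N) (L : Lnorm_kind)
  (M : 'M[R]_n -> Prop) (a : 'M[R]_n) (c : R)
  (hball : forall x : 'M[R]_n, mnorm L (x - a) < c -> M x)
  (hsing : exists x0 : 'M[R]_n, mnorm L (x0 - a) < c /\ \rank x0 = n.-1)
  (F : 'M[R]_n -> 'M[R]_n)
  (hF : exists Lp Ls : Lnorm_kind, poly_lipschitz Lp Ls F) :
  forall E : R, 0 < E ->
    exists x : 'M[R]_n, M x /\ x \in unitmx /\ E < mnorm L (invmx x - F x).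
Proof.
move=> E E0.
have [x0 [hx0a hrk]] := hsing.
have [Lp [Ls [N [fs hlip]]]] := hF.
have hx0u : x0 \notin unitmx.
  by rewrite -row_free_unit /row_free hrk ltn_eqF // ltn_predL.
have [v [v0 hv]] := nonunit_ker n x0 hx0u.
have [j hj] : exists j, v 0 j != 0.
  apply/existsP; apply: contraR v0 => /existsPn H; apply/eqP/rowP => k.
  by rewrite mxE; move: (H k) => /negPn/eqP.
pose V := \sum_k `|v 0 k|.
have hvj : 0 < `|v 0 j| by rewrite normr_gt0.
have V0 : 0 < V.
  apply: (lt_le_trans hvj); exact: (le_sum_term (fun k => `|v 0 k|) j).
pose K := mnorm Lp x0 + 1.
have K0 : 0 <= K by apply: addr_ge0 => //; exact: mnorm_ge0.
have [B HB] := sum_poly2_bound N.+1 fs K K0.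
pose C := Ssum (F x0) + B.
have HC : forall x, Ssum (x - x0) <= 1 -> forall i k, `|F x i k| <= C.
  move=> x hx i k.
  have -> : F x i k = F x0 i k + (F x - F x0) i k by rewrite !mxE; ring.
  apply: (le_trans (ler_normD _ _)); apply: lerD; first exact: entry_le_Ssum.
  apply: (le_trans (entry_le_mnorm Ls _ i k)); apply: (le_trans (hlip x x0)).
  have hm0 : 0 <= mnorm Lp (x - x0) by exact: mnorm_ge0.
  have hm1 : mnorm Lp (x - x0) <= 1 by exact: (le_trans (mnorm_leS Lp _)).
  have hxK : `|mnorm Lp x| <= K.
    rewrite ger0_norm ?mnorm_ge0 //.
    have := mnorm_addS Lp x0 (x - x0); rewrite addrC subrK => h.
    rewrite /K; lra.
  have hx0K : `|mnorm Lp x0| <= K by rewrite ger0_norm ?mnorm_ge0 // /K; lra.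
  apply: (le_trans _ (HB _ _ hxK hx0K)); apply: ler_sum => i' _.
  set e := eval2 _ _ _; set y := _ ^+ _.
  have y0 : 0 <= y by exact: exprn_ge0.
  have y1 : y <= 1 by exact: exprn_ile1.
  have he : e <= `|e| by exact: ler_norm.
  have p1 : 0 <= (`|e| - e) * y by apply: mulr_ge0 => //; lra.
  have p2 : 0 <= `|e| * (1 - y) by apply: mulr_ge0 => //; lra.
  nra.
pose Bnd := E + C.
have C0 : 0 <= C.
  apply: addr_ge0; first exact: Ssum_ge0.
  have h0 : `|0 : R| <= K by rewrite normr0.
  apply: (le_trans _ (HB 0 0 h0 h0)); apply: sumr_ge0 => i _; exact: normr_ge0.
have Bnd0 : 0 < Bnd by rewrite /Bnd; lra.
pose d := mnorm L (x0 - a).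
pose nn : R := (n * n)%:R.
have nn0 : 0 < nn by rewrite ltr0n muln_gt0 hn.
pose tm := Num.min (Num.min (1 / nn) ((c - d) / (2 * nn))) (`|v 0 j| / (2 * Bnd * V)).
have tm0 : 0 < tm.
  rewrite /tm !lt_min; apply/andP; split; first (apply/andP; split).
  - by apply: divr_gt0.
  - apply: divr_gt0; rewrite /d; lra.
  - by apply: divr_gt0 => //; apply: mulr_gt0 => //; apply: mulr_gt0.
have p0 : char_poly (- x0) != 0 by apply: monic_neq0; exact: char_poly_monic.
have [t [t0 [ttm hroot]]] := nonroot_in (char_poly (- x0)) tm p0 tm0.
have ht1 : t <= 1 / nn.
  by apply: (le_trans ttm); rewrite /tm !ge_min lexx.
have ht2 : t <= (c - d) / (2 * nn).
  by apply: (le_trans ttm); rewrite /tm !ge_min lexx !orbT.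
have ht3 : t <= `|v 0 j| / (2 * Bnd * V).
  by apply: (le_trans ttm); rewrite /tm !ge_min lexx !orbT.
pose x := x0 + t%:M.
have hxx0 : x - x0 = t%:M by rewrite /x [x0 + _]addrC addrK.
have hSt : Ssum (t%:M : 'M[R]_n) <= nn * t.
  have -> : nn * t = \sum_(i < n) \sum_(k < n) t.
    by rewrite sumr_const card_ord sumr_const card_ord -mulrnA mulr_natl.
  apply: ler_sum => i _; apply: ler_sum => k _; rewrite mxE.
  by case: (i == k); rewrite ?mulr1n ?mulr0n ?normr0 ?gtr0_norm // ltW.
have hxu : x \in unitmx.
  apply: contraT => hnu; have [w [w0 hw]] := nonunit_ker n x hnu.
  suff : eigenvalue (- x0) t by rewrite eigenvalue_root_char (negbTE hroot).
  apply/eigenvalueP; exists w => //.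
  move: hw; rewrite /x mulmxDr mul_mx_scalar => /eqP; rewrite addr_eq0 => /eqP hw.
  by rewrite mulmxN hw opprK.
exists x; split; last split => //.
  apply: hball.
  have -> : x - a = (x0 - a) + t%:M by rewrite /x; rewrite addrAC.
  apply: (le_lt_trans (mnorm_addS L _ _)); rewrite -/d.
  have h1 : nn * t <= (c - d) / 2.
    by move: ht2; rewrite ler_pdivlMr ?mulr_gt0 // => h; rewrite ler_pdivlMr //; lra.
  rewrite /d in h1 *; lra.
have hSx : Ssum (x - x0) <= 1.
  rewrite hxx0; apply: (le_trans hSt); move: ht1; rewrite ler_pdivlMr // mulrC //.
have [k hk] : exists k, Bnd < `|invmx x k j|.
  apply/existsP; apply: contraT => /existsPn H.
  have Hle : forall k, `|invmx x k j| <= Bnd by move=> k; move: (H k); rewrite -leNgt.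
  have hvx : v = t *: (v *m invmx x).
    by rewrite -{1}(mulmxK hxu v) /x mulmxDr hv add0r mul_mx_scalar scalemxAl.
  have hle : `|v 0 j| <= t * (Bnd * V).
    rewrite {1}hvx !mxE normrM (gtr0_norm t0); apply: ler_wpM2l; first exact: ltW.
    rewrite /V mulr_sumr; apply: (le_trans (ler_norm_sum _ _ _)); apply: ler_sum => k _.
    rewrite normrM mulrC; apply: ler_wpM2r => //; exact: Hle.
  move: ht3; rewrite ler_pdivlMr; last by apply: mulr_gt0 => //; apply: mulr_gt0.
  have -> : t * (2 * Bnd * V) = 2 * (t * (Bnd * V)) by ring.
  move=> h; suff : False by []; lra.
apply: (lt_le_trans _ (entry_le_mnorm L _ k j)); rewrite !mxE.
have := ler_normD (invmx x k j - F x k j) (F x k j); rewrite subrK.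
have := HC x hSx k j; rewrite /Bnd in hk; lra.
Qed.
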